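(* Assume the standing setup below, and let $i$ be an integer with $0\le i\le s-2r+1$. Then, as subspaces of the space of linear forms over $\mathbb{F}_p$ in $x_1,\ldots,x_m$, \[ \Big\langle L_H : H\in \textstyle\bigcup_{j=i}^{i+2r-1}\mathbb{P}_j(X)\Big\rangle =\Big\langle L_H : H\in \textstyle\bigcup_{j=i}^{i+2r-1}\mathbb{P}_j(X)\Big\rangle+\Big\langle \sum_{H\in\mathbb{P}_{i+2r}(X),\,I\subseteq H} L_H : I\in \mathbb{P}_i(X)\Big\rangle, \] where $\langle S\rangle$ denotes the $\mathbb{F}_p$-span of $S$.
   Context: Standing setup: $p$ is a prime; $K=\{k_1,\ldots,k_r\}$ and $L=\{l_1,\ldots,l_s\}$ are disjoint subsets of $\{0,1,\ldots,p-1\}$; $\mathcal{A}=\{A_1,\ldots,A_m\}$ is a family of distinct subsets of $[n]$ with $|A_i|\pmod p\in K$ for all $i$ and $|A_i\cap A_j|\pmod p\in L$ for all $i\ne j$. Let $X=[n-1]$. Associate a variable $x_i$ to each $A_i$, and for each $I\subseteq X$ define the linear form over $\mathbb{F}_p$: $L_I=\sum_{i:\ I\subseteq A_i} x_i$. For $j\ge0$, $\mathbb{P}_j(X)$ is the set of $j$-element subsets of $X$. *)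

(* Defs.v *)
From HB Require Import structures.
From mathcomp Require Import all_boot all_order all_algebra.
Set Implicit Arguments. Unset Strict Implicit. Unset Printing Implicit Defensive.
Import GRing.Theory.
Local Open Scope ring_scope.

(* The ground set [n] = {1,..,n} is modelled by 'I_n = {0,..,n-1} (shift by 1).
   X = [n-1] = {1,..,n-1} is then {0,..,n-2}, i.e. the x : 'I_n with x < n-1. *)
Definition Xset (n : nat) : {set 'I_n} := [set x : 'I_n | (x < n.-1)%N].

Definition Pj (n j : nat) : {set {set 'I_n}} :=
  [set H : {set 'I_n} | (H \subset Xset n) && (#|H| == j)].

(* Union of P_j(X) for lo <= j < hi (exclusive upper bound, to avoid truncated subtraction). *)
Definition Prange (n lo hi : nat) : {set {set 'I_n}} :=
  [set H : {set 'I_n} | (H \subset Xset n) && (lo <= #|H| < hi)%N].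

(* The linear form L_I = sum_{k : I ⊆ A_k} x_k, as its coefficient row vector
   in F_p^m (coordinate k is the coefficient of x_k). *)
Definition Lform (p n m : nat) (A : 'I_m -> {set 'I_n}) (I : {set 'I_n})
  : 'rV['F_p]_m :=
  \row_(k < m) ((I \subset A k)%:R : 'F_p).

Definition spanL (p n m : nat) (A : 'I_m -> {set 'I_n}) (S : {set {set 'I_n}})
  : {vspace 'rV['F_p]_m} :=
  <<[seq Lform p A H | H <- enum S]>>%VS.

Definition spanSums (p n m : nat) (A : 'I_m -> {set 'I_n}) (i r : nat)
  : {vspace 'rV['F_p]_m} :=
  <<[seq (\sum_(H in Pj n (i + 2 * r)%N | J \subset H) Lform p A H)%R
      | J : {set 'I_n} <- enum (Pj n i)]>>%VS.

(* Main.v *)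
Require Import Defs.
From HB Require Import structures.
From mathcomp Require Import all_boot all_order all_algebra.
From mathcomp Require Import ring zify.
Set Implicit Arguments. Unset Strict Implicit. Unset Printing Implicit Defensive.
Import GRing.Theory.

Section Helpers.
Local Open Scope ring_scope.
Definition ffr (R : pzRingType) (y : R) (j : nat) : R := \prod_(u < j) (y - u%:R).

Lemma ffrS (R : pzRingType) (y : R) j : ffr y j.+1 = ffr y j * (y - j%:R).
Proof. by rewrite /ffr big_ord_recr. Qed.

Lemma ffr_expand (F : fieldType) (ts : seq F) : exists c : nat -> F,
  [/\ c (size ts) = 1, (forall j, (size ts < j)%N -> c j = 0) &
   forall y, \prod_(t <- ts) (y - t) = \sum_(j < (size ts).+1) c j * ffr y j].
Proof.
elim: ts => [|t ts [c [c1 c0 cE]]].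
  exists (fun j => (j == 0%N)%:R); split => //.
    by case.
  by move=> y; rewrite big_nil big_ord1 /ffr big_ord0 mulr1.
set d := size ts.
exists (fun j => (if j is j'.+1 then c j' else 0) + (j%:R - t) * c j); split.
- by rewrite /= c1 c0 ?mulr0 ?addr0.
- by case=> [//|j] /= hj; rewrite c0 ?c0 ?mulr0 ?addr0 //; apply: ltn_trans hj.
move=> y; rewrite big_cons cE.
rewrite [RHS](eq_bigr (fun j : 'I_d.+2 => (if (j : nat) is j'.+1 then c j' else 0) * ffr y j
   + (j%:R - t) * c j * ffr y j)); last by move=> j _; rewrite mulrDl.
rewrite big_split /= [X in _ = X + _]big_ord_recl /= mul0r add0r.
rewrite [X in _ = _ + X]big_ord_recr /= (c0 d.+1) // mulr0 mul0r addr0.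
rewrite mulr_sumr -big_split /=; apply: eq_bigr => j _.
rewrite /bump /= ffrS.
have -> : y - t = (y - j%:R) + (j%:R - t) by rewrite addrA subrK.
rewrite add0n mulrDl mulrA; congr (_ + _).
all: ring.
Qed.

Lemma ffr_nat (R : pzRingType) (y j : nat) : ffr (y%:R : R) j = (y ^_ j)%:R.
Proof.
elim: j => [|j IH]; first by rewrite /ffr big_ord0.
rewrite ffrS IH ffactnSr natrM.
case: (leqP j y) => hj; first by rewrite natrB.
by rewrite ffact_small // !mul0r.
Qed.

Lemma prime_ndvd_fact p d : prime p -> (d < p)%N -> ~~ (p %| d`!)%N.
Proof.
move=> pr; elim: d => [|d IH] hd; first by rewrite Euclid_dvd1.
rewrite factS Euclid_dvdM // negb_or IH ?(ltn_trans _ hd) // andbT.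
by rewrite gtnNdvd.
Qed.

Lemma binom_interp p (ts : seq 'F_p) : prime p -> (size ts < p)%N ->
  exists c : nat -> 'F_p, forall y : nat, \prod_(t <- ts) (y%:R - t) = 0 ->
    'C(y, size ts)%:R = \sum_(j < size ts) c j * 'C(y, j)%:R.
Proof.
move=> pr hd; have [e [e1 e0 eE]] := ffr_expand ts.
set d := size ts in hd e1 e0 eE *.
have f0 : (d`!%:R : 'F_p) != 0.
  by rewrite -(dvdn_pcharf (pchar_Fp pr)) prime_ndvd_fact.
exists (fun j => - e j * j`!%:R / d`!%:R) => y hy.
move: (eE y%:R); rewrite hy big_ord_recr /= e1 mul1r => /esym /eqP.
rewrite addr_eq0 => /eqP H0.
have H : ffr (y%:R : 'F_p) d = - \sum_(i < d) e i * ffr y%:R i by rewrite H0 opprK.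
apply: (mulIf f0); rewrite -natrM bin_ffact -ffr_nat H mulr_suml -sumrN; apply: eq_bigr => j _.
rewrite ffr_nat -bin_ffact natrM.
rewrite [RHS]mulrAC divfK //.
by rewrite !mulNr -mulrA [_ * j`!%:R]mulrC.
Qed.
Lemma count_sets n i d (I C : {set 'I_n}) : I \subset C :&: Xset n -> #|I| = i ->
  #|[set H | [&& H \in Pj n (i + d)%N, I \subset H & H \subset C]]|
   = 'C(#|C :&: Xset n| - i, d)%N.
Proof.
set B := C :&: Xset n => hIB hI.
have hBX : B \subset Xset n by apply: subsetIr.
have hBC : B \subset C by apply: subsetIl.
have -> : [set H | [&& H \in Pj n (i + d)%N, I \subset H & H \subset C]]
   = (fun J : {set 'I_n} => I :|: J) @: [set J : {set 'I_n} | (J \subset B :\: I) && (#|J| == d)].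
  apply/setP => H; rewrite /Pj !inE; apply/idP/imsetP.
  - case/and3P => /andP [hHX /eqP hHc] hIH hHC.
    exists (H :\: I).
      rewrite inE setSD ?subsetI ?hHC ?hHX //=.
      by rewrite cardsD (setIidPr hIH) hHc hI addKn.
    by rewrite -{1}(setID H I) (setIidPr hIH).
  - case=> J; rewrite inE => /andP [/subsetDP [hJB hJI] /eqP hJ] ->.
    rewrite subUset (subset_trans hIB hBX) (subset_trans hJB hBX) /=.
    rewrite cardsU hI hJ.
    rewrite (_ : I :&: J = set0) ?cards0 ?subn0 ?eqxx ?subsetUl //=.
      by rewrite subUset (subset_trans hIB hBC) (subset_trans hJB hBC).
    by apply/eqP; rewrite setI_eq0 disjoint_sym.
rewrite card_in_imset.
  by rewrite cards_draws cardsD (setIidPr hIB) hI.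
move=> J1 J2; rewrite !inE => /andP [/subsetDP [_ h1] _] /andP [/subsetDP [_ h2] _] e.
rewrite -(setDidPl h1) -(setDidPl h2).
have := congr1 (fun X => X :\: I) e; by rewrite /= !setDUl setDv !set0U.
Qed.

Lemma entry_sum p n m (A : 'I_m -> {set 'I_n}) (J : {set 'I_n}) q k :
  (\sum_(H in Pj n q | J \subset H) Lform p A H) 0 k
  = (#|[set H | [&& H \in Pj n q, J \subset H & H \subset A k]]|)%:R.
Proof.
rewrite summxE; under eq_bigr do rewrite mxE.
rewrite -sum1_card natr_sum big_mkcond [RHS]big_mkcond; apply: eq_bigr => H _.
rewrite in_set; case: (H \in Pj n q); case: (J \subset H); by case: (H \subset A k).
Qed.

Lemma sum_indic p n m (A : 'I_m -> {set 'I_n}) (S : {set 'I_n}) k :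
  (\sum_(x in S) Lform p A [set x]) 0 k = (#|S :&: A k|)%:R.
Proof.
rewrite summxE; under eq_bigr do rewrite mxE sub1set.
rewrite -sum1_card natr_sum big_mkcond [RHS]big_mkcond; apply: eq_bigr => x _.
by rewrite in_setI; case: (x \in S); case: (x \in A k).
Qed.

End Helpers.

Section Main.
Local Open Scope ring_scope.

Lemma card_notX n : (#|~: Xset n| <= 1)%N.
Proof.
apply/card_le1_eqP => x y; rewrite !inE -!leqNgt => hx hy.
move: hx hy; rewrite -!subn1 => hx hy.
apply: val_inj; have := ltn_ord x; have := ltn_ord y.
change ((nat_of_ord y < n)%N -> (nat_of_ord x < n)%N -> nat_of_ord y = nat_of_ord x).
lia.
Qed.

Lemma main_aux (p n m : nat) (K L : {set 'I_p})
  (A : 'I_m -> {set 'I_n}) (i : nat) :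
  prime p ->
  [disjoint K & L] ->
  injective A ->
  (forall k : 'I_m, exists2 x : 'I_p, x \in K & nat_of_ord x = (#|A k| %% p)%N) ->
  (forall k l : 'I_m, k != l ->
     exists2 x : 'I_p, x \in L & nat_of_ord x = (#|A k :&: A l| %% p)%N) ->
  (i + 2 * #|K| <= #|L| + 1)%N ->
  spanL p A (Prange n i (i + 2 * #|K|)%N)
  = (spanL p A (Prange n i (i + 2 * #|K|)%N) + spanSums p A i #|K|)%VS.
Proof.
move=> pr hdisj injA hK hL hi.
have hrs : (#|K| + #|L| <= p)%N.
  have h1 : (#|K :|: L| <= p)%N by rewrite -[X in (_ <= X)%N]card_ord max_card.
  rewrite -cardsUI (_ : K :&: L = set0) ?cards0 ?addn0 //.
  by apply/eqP; rewrite setI_eq0.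
set r := #|K| in hi hrs *.
set U := spanL p A (Prange n i (i + 2 * r)%N).
have memU : forall H : {set 'I_n}, H \subset Xset n -> (i <= #|H| < i + 2 * r)%N ->
    Lform p A H \in U.
  move=> H hHX hH; apply: memv_span; apply: map_f; by rewrite mem_enum inE hHX.
apply/esym/addv_idPl/span_subvP => v /mapP [J]; rewrite mem_enum => hJ ->.
move: hJ; rewrite inE => /andP [hJX /eqP hJc].
case: (ltnP (2 * r) p) => hp.
-
  pose ts : seq 'F_p := flatten [seq [:: (nat_of_ord t)%:R - i%:R; (nat_of_ord t)%:R - i%:R - 1]
                                   | t : 'I_p <- enum K].
  have hsz : size ts = (2 * r)%N.
    rewrite /ts /r cardE; elim: (enum K) => //= t s IH.
    by rewrite IH mulnS.
  have hsp : (size ts < p)%N by rewrite hsz.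
  have [c hc] := binom_interp pr hsp.
  rewrite hsz in hc.
  have -> : \sum_(H in Pj n (i + 2 * r) | J \subset H) Lform p A H
     = \sum_(j < 2 * r) c j *: \sum_(H in Pj n (i + j) | J \subset H) Lform p A H.
    apply/rowP => k; rewrite entry_sum summxE.
    under eq_bigr do rewrite mxE entry_sum.
    case hJk: (J \subset A k); last first.
      have E q : #|[set H | [&& H \in Pj n q, J \subset H & H \subset A k]]| = 0%N.
        apply: eq_card0 => H; rewrite in_set; apply/negP => /and3P [_ hJH hHA].
        by rewrite (subset_trans hJH hHA) in hJk.
      rewrite E; under eq_bigr do rewrite E mulr0.
      by rewrite big1.
    have hJB : J \subset A k :&: Xset n by rewrite subsetI hJk hJX.
    rewrite count_sets //; under eq_bigr do rewrite count_sets //.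
    apply: hc.
    have [x hxK hx] := hK k.
    set e := #|A k :\: Xset n|.
    have he : (e <= 1)%N.
      apply: leq_trans (card_notX n); apply: subset_leq_card.
      by rewrite setDE subsetIr.
    have hcard : (#|A k :&: Xset n| + e)%N = #|A k| by rewrite cardsID.
    have hi' : (i <= #|A k :&: Xset n|)%N by rewrite -hJc subset_leq_card.
    have hx' : (nat_of_ord x)%:R = (#|A k :&: Xset n|%:R + e%:R : 'F_p).
      by rewrite hx Fp_nat_mod // -hcard natrD.
    apply/eqP; rewrite prodf_seq_eq0; apply/hasP.
    have [e0|e1] : e = 0%N \/ e = 1%N by lia.
    + exists ((nat_of_ord x)%:R - i%:R).
        apply/flattenP; exists [:: (nat_of_ord x)%:R - i%:R; (nat_of_ord x)%:R - i%:R - 1].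
          by apply/mapP; exists x; rewrite ?mem_enum.
        by rewrite inE eqxx.
      rewrite /= natrB // hx' e0 addr0 subrr //.
    + exists ((nat_of_ord x)%:R - i%:R - 1).
        apply/flattenP; exists [:: (nat_of_ord x)%:R - i%:R; (nat_of_ord x)%:R - i%:R - 1].
          by apply/mapP; exists x; rewrite ?mem_enum.
        by rewrite !inE eqxx orbT.
      rewrite /= natrB // hx' e1; apply/eqP; ring.
  apply: memv_suml => j _; apply: memvZ; apply: memv_suml => H /andP [].
  rewrite inE => /andP [hHX /eqP hHc] _; apply: memU => //.
  rewrite hHc leq_addr /= ltn_add2l; exact: ltn_ord.
-
  have hp2 := prime_gt1 pr.
  have [r1 [s1 i0]] : r = 1%N /\ #|L| = 1%N /\ i = 0%N by lia.
  have p2 : p = 2%N by lia.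
  have /cards1P [kk hKe] : #|K| == 1%N by rewrite -/r r1.
  have /cards1P [ll hLe] : #|L| == 1%N by rewrite s1.
  have hkl : nat_of_ord kk != nat_of_ord ll.
    apply/negP => /eqP /val_inj ekl; move: hdisj.
    by rewrite hKe hLe ekl disjoints1 in_set1 eqxx.
  have hKk : forall k, (#|A k|%:R : 'F_p) = (nat_of_ord kk)%:R.
    move=> k; have [x hxK hx] := hK k; move: hxK; rewrite hKe in_set1 => /eqP <-.
    by rewrite hx Fp_nat_mod.
  have hLk : forall k l, k != l -> (#|A k :&: A l|%:R : 'F_p) = (nat_of_ord ll)%:R.
    move=> k l nkl; have [x hxL hx] := hL k l nkl; move: hxL; rewrite hLe in_set1 => /eqP <-.
    by rewrite hx Fp_nat_mod.
  set one := Lform p A set0.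
  set cx := fun x => Lform p A [set x].
  have one_in : one \in U by apply: memU; rewrite ?sub0set // cards0 i0 r1.
  have cx_in : forall x, x \in Xset n -> cx x \in U.
    by move=> x hx; apply: memU; rewrite ?sub1set // cards1 i0 r1.
  set D := (nat_of_ord kk)%:R - (nat_of_ord ll)%:R : 'F_p.
  have D0 : D != 0.
    have [[e1 e2]|[e1 e2]] : (nat_of_ord kk = 0%N /\ nat_of_ord ll = 1%N) \/
        (nat_of_ord kk = 1%N /\ nat_of_ord ll = 0%N).
      have := ltn_ord kk; have := ltn_ord ll; move: hkl => /eqP; lia.
    + by rewrite /D e1 e2 sub0r oppr_eq0 oner_eq0.
    + by rewrite /D e1 e2 subr0 oner_eq0.
  have Fact1 : forall k, \sum_(x in A k) cx x
      = (nat_of_ord ll)%:R *: one + D *: delta_mx 0 k.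
    move=> k; apply/rowP => l; rewrite sum_indic !mxE sub0set eqxx /= mulr1.
    case: (eqVneq k l) => [<-|nkl].
      by rewrite setIid hKk mulr1 /D addrC subrK.
    by rewrite hLk // mulr0 addr0.
  set w := fun k => \sum_(x in A k :&: Xset n) cx x.
  have w_in : forall k, w k \in U.
    by move=> k; apply: memv_suml => x; rewrite inE => /andP [_ hx]; apply: cx_in.
  have key : forall k, \sum_(x in A k :\: Xset n) cx x \in U.
    have : #|~: Xset n| = 0%N \/ #|~: Xset n| = 1%N by have := card_notX n; lia.
    case=> [/eqP|/eqP /cards1P [a ha]].
      rewrite cards_eq0 => /eqP h0 k.
      by rewrite setDE h0 setI0 big_set0 mem0v.
    set zk := fun k => ((a \in A k)%:R : 'F_p).
    have dk : forall k, \sum_(x in A k :\: Xset n) cx x = zk k *: cx a.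
      move=> k; rewrite setDE ha /zk; case: (boolP (a \in A k)) => h.
        by rewrite (setIidPr _) ?sub1set // big_set1 scale1r.
      rewrite (_ : A k :&: [set a] = set0) ?big_set0 ?scale0r //.
      by apply/eqP; rewrite setI_eq0 disjoint_sym disjoints1.
    suff : cx a \in U by move=> h k; rewrite dk memvZ.
    set q := fun k => w k - (nat_of_ord ll)%:R *: one.
    have q_in : forall k, q k \in U by move=> k; rewrite memvB ?memvZ.
    have e1 : forall k, zk k *: cx a = D *: delta_mx 0 k - q k.
      move=> k; rewrite -dk /q opprB addrA.
      rewrite [D *: _ + _]addrC -Fact1 [\sum_(x in A k) _](big_setID (Xset n)) /= -/(w k).
      by rewrite [w k + _]addrC addrK.
    have sum_e : \sum_k delta_mx 0 k = one.
      rewrite [RHS]row_sum_delta; apply: eq_bigr => k _.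
      by rewrite mxE sub0set scale1r.
    have cxE : cx a = \sum_k zk k *: delta_mx 0 k.
      rewrite {1}[cx a]row_sum_delta; apply: eq_bigr => k _.
      by rewrite mxE sub1set.
    have stepB : \sum_k zk k *: cx a \in U.
      rewrite (eq_bigr _ (fun k _ => e1 k)) sumrB -scaler_sumr sum_e.
      by rewrite memvB ?memvZ ?memv_suml.
    have zz : forall k, zk k * zk k = zk k.
      by move=> k; rewrite /zk; case: (a \in A k); rewrite ?mulr1 ?mulr0.
    have stepA : D *: cx a \in U.
      rewrite cxE scaler_sumr.
      rewrite (eq_bigr (fun k => zk k *: (zk k *: cx a) + zk k *: q k)); last first.
        move=> k _; rewrite scalerA mulrC -scalerA e1.
        by rewrite -scalerDr subrK.
      rewrite big_split /= memvD //; last by apply: memv_suml => k _; rewrite memvZ.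
      rewrite (eq_bigr (fun k => zk k *: cx a)) //.
      by move=> k _; rewrite scalerA zz.
    by rewrite -[cx a]scale1r -(mulVf D0) -scalerA memvZ.
  have e_in : forall k, delta_mx 0 k \in U.
    move=> k; have : D *: delta_mx 0 k \in U.
      have -> : D *: delta_mx 0 k
          = w k + \sum_(x in A k :\: Xset n) cx x - (nat_of_ord ll)%:R *: one.
        rewrite -(big_setID (Xset n)) Fact1.
        by rewrite [_ + D *: _]addrC addrK.
      by rewrite memvB ?memvD ?memvZ.
    by move=> h; rewrite -[delta_mx 0 k]scale1r -(mulVf D0) -scalerA memvZ.
  rewrite [X in X \in U]row_sum_delta; apply: memv_suml => k _.
  by rewrite memvZ.
Qed.

End Main.

Theorem mainTheorem5 (p n m : nat) (K L : {set 'I_p})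
  (A : 'I_m -> {set 'I_n}) (i : nat) :
  prime p ->
  [disjoint K & L] ->
  injective A ->
  (forall k : 'I_m, exists2 x : 'I_p, x \in K & nat_of_ord x = (#|A k| %% p)%N) ->
  (forall k l : 'I_m, k != l ->
     exists2 x : 'I_p, x \in L & nat_of_ord x = (#|A k :&: A l| %% p)%N) ->
  (i + 2 * #|K| <= #|L| + 1)%N ->
  spanL p A (Prange n i (i + 2 * #|K|))
  = (spanL p A (Prange n i (i + 2 * #|K|)) + spanSums p A i #|K|)%VS.
Proof. exact: main_aux. Qed.
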